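(* Consider the Highest Diversity Contribution (HDC) selection mechanism on \textsc{LOTZ}, using as diversity measure either the hypervolume contribution $\mathrm{HVC}(x,P)$ with reference point $(r_1,r_2)$ satisfying $r_1\le -n^2$ and $r_2\le -n^2$, or the crowding distance contribution $\mathrm{CDC}(x,P)$, applied to a population $P$ containing only search points on the Pareto front. Then the parent chosen by HDC always has either the minimum or the maximum number of ones among all search points in $P$.
   Context: Search space $\{0,1\}^n$; objectives maximised. $\textsc{LOTZ}(x)=(\mathrm{LO}(x),\mathrm{TZ}(x))$, $\mathrm{LO}$ = number of leading ones, $\mathrm{TZ}$ = number of trailing zeros. The Pareto set is $\{1^i0^{n-i}:0\le i\le n\}$; populations consist of points with distinct objective vectors. HDC: select an individual with the highest diversity score, ties broken uniformly at random. HVC: sort $P$ by increasing $f_1$ as $x_1,\dots,x_\mu$, set $f_1(x_0)=r_1$, $f_2(x_{\mu+1})=r_2$, $\mathrm{HVC}(x_i,P)=(f_1(x_i)-f_1(x_{i-1}))(f_2(x_i)-f_2(x_{i+1}))$. CDC: each point starts at 0; for each objective $m$, sort ascending by $f_m$, boundary points get $\infty$, intermediate $P[i]$ gets $+(f_m(P[i+1])-f_m(P[i-1]))/(f_m^{\max}-f_m^{\min})$, with $f_m^{\max},f_m^{\min}$ the max and min values of objective $m$. *)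

(* Defs.v *)
From mathcomp Require Import all_boot all_order all_algebra.
Set Implicit Arguments. Unset Strict Implicit. Unset Printing Implicit Defensive.
Import Order.TTheory GRing.Theory Num.Theory.

Notation bits n := (n.-tuple bool).

Definition LO {n} (x : bits n) : nat := find negb x.
Definition TZ {n} (x : bits n) : nat := find id (rev x).
Definition ones {n} (x : bits n) : nat := count id x.

Definition LOTZ {n} (x : bits n) : nat * nat := (LO x, TZ x).

Definition on_front {n} (x : bits n) : Prop :=
  exists i, i <= n /\ val x = nseq i true ++ nseq (n - i) false.

(* P is sorted by increasing f1 = LO as x_1..x_mu; f1(x_0) = r1,
   f2(x_(mu+1)) = r2;
   HVC(x_i,P) = (f1(x_i) - f1(x_(i-1))) * (f2(x_i) - f2(x_(i+1))). *)
Definition HVC {n} (r1 r2 : int) (x : bits n) (P : seq (bits n)) : int :=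
  let s := sort (fun a b => LO a <= LO b)%N P in
  let i := index x s in
  let prev1 : int := if i == 0%N then r1 else Posz (LO (nth x s i.-1)) in
  let next2 : int := if i.+1 == size s then r2 else Posz (TZ (nth x s i.+1)) in
  (Posz (LO x) - prev1) * (Posz (TZ x) - next2).

(* Scores live in rat extended by +infinity: [None] = +infinity. *)
Definition escore := option rat.
Definition eadd (a b : escore) : escore :=
  match a, b with Some a', Some b' => Some (a' + b')%R | _, _ => None end.
Definition ele (a b : escore) : bool :=
  match a, b with
  | _, None => true
  | None, Some _ => false
  | Some a', Some b' => (a' <= b')%R
  end.

Definition fmaxP {n} (f : bits n -> nat) (P : seq (bits n)) : nat :=
  foldr maxn 0%N (map f P).
Definition fminP {n} (f : bits n -> nat) (P : seq (bits n)) : nat :=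
  let l := map f P in foldr minn (head 0%N l) l.

Definition cd_obj {n} (f : bits n -> nat) (x : bits n) (P : seq (bits n))
  : escore :=
  let s := sort (fun a b => f a <= f b)%N P in
  let i := index x s in
  if (i == 0%N) || (i.+1 == size s) then None
  else Some (((f (nth x s i.+1))%:R - (f (nth x s i.-1))%:R)
             / ((fmaxP f P)%:R - (fminP f P)%:R) : rat)%R.

Definition CDC {n} (x : bits n) (P : seq (bits n)) : escore :=
  eadd (eadd (Some (0 : rat)%R) (cd_obj LO x P)) (cd_obj TZ x P).

Definition ones_extreme {n} (P : seq (bits n)) (x : bits n) : Prop :=
  (forall y, y \in P -> (ones x <= ones y)%N) \/
  (forall y, y \in P -> (ones y <= ones x)%N).

(* Main.v *)
Require Import Defs.
From mathcomp Require Import all_boot all_order all_algebra.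
From mathcomp Require Import zify.
Import Order.TTheory GRing.Theory Num.Theory.

Lemma front_facts n (x : n.-tuple bool) :
  on_front x -> LO x = ones x /\ TZ x + ones x = n.
Proof.
case=> i [hi ex].
rewrite /LO /TZ /ones ex.
rewrite find_cat has_nseq /= size_nseq find_nseq /=.
rewrite rev_cat !rev_nseq find_cat has_nseq /= size_nseq find_nseq /=.
rewrite count_cat !count_nseq /= !andbF find_nseq /=; split; lia.
Qed.

Section S.
Variables (n : nat) (f : n.-tuple bool -> nat) (P : seq (n.-tuple bool)) (x : n.-tuple bool).
Let s := sort (fun a b => f a <= f b) P.

Lemma s_mem y : (y \in s) = (y \in P).
Proof. by rewrite /s (perm_mem (permEl (perm_sort _ _))). Qed.

Lemma s_size : size s = size P.
Proof. by rewrite /s size_sort. Qed.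

Lemma s_sorted : sorted (fun a b => f a <= f b) s.
Proof. apply: sort_sorted => a b; exact: leq_total. Qed.

Lemma s_le i j : i < size s -> j < size s -> i <= j -> f (nth x s i) <= f (nth x s j).
Proof.
move=> hi hj hij.
apply: (sorted_leq_nth _ _ x s_sorted) => //.
move=> a b c /= h1 h2; exact: leq_trans h1 h2.
Qed.

Lemma s_first : x \in P -> index x s = 0 -> forall y, y \in P -> f x <= f y.
Proof.
move=> xP hk y yP.
have xs : x \in s by rewrite s_mem.
have ys : y \in s by rewrite s_mem.
rewrite -{1}(nth_index x xs) -(nth_index x ys) hk.
apply: s_le; rewrite ?index_mem //; by rewrite -(index_mem x) hk in xs.
Qed.

Lemma s_last : x \in P -> (index x s).+1 = size s -> forall y, y \in P -> f y <= f x.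
Proof.
move=> xP hk y yP.
have xs : x \in s by rewrite s_mem.
have ys : y \in s by rewrite s_mem.
rewrite -(nth_index x xs) -(nth_index x ys).
apply: s_le; rewrite ?index_mem //.
by rewrite -ltnS hk index_mem.
Qed.
End S.
Arguments s_first {n f P x}.
Arguments s_last {n f P x}.
Arguments s_mem {n} f {P} y.
Arguments s_size {n} f P.

Theorem lemma9 (n : nat) (r1 r2 : int) (P : seq (n.-tuple bool)) :
  (r1 <= - Posz (n ^ 2))%R -> (r2 <= - Posz (n ^ 2))%R ->
  uniq (map LOTZ P) ->
  (forall x, x \in P -> on_front x) ->
  (* HDC with the hypervolume contribution *)
  (forall x, x \in P ->
     (forall y, y \in P -> (HVC r1 r2 y P <= HVC r1 r2 x P)%R) ->
     ones_extreme P x) /\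
  (* HDC with the crowding distance contribution *)
  (forall x, x \in P ->
     (forall y, y \in P -> ele (CDC y P) (CDC x P)) ->
     ones_extreme P x).
Proof.
move=> hr1 hr2 hu hf.
have LOo : forall y, y \in P -> LO y = ones y by move=> y /hf /front_facts [].
have TZo : forall y, y \in P -> TZ y + ones y = n by move=> y /hf /front_facts [].
have LOext : forall x, x \in P ->
   (index x (sort (fun a b => LO a <= LO b) P) == 0) ||
   ((index x (sort (fun a b => LO a <= LO b) P)).+1 == size (sort (fun a b => LO a <= LO b) P)) ->
   ones_extreme P x.
  move=> x xP /orP [/eqP h|/eqP h].
    left=> y yP; rewrite -(LOo x) // -(LOo y) //; exact: (s_first xP h).
  right=> y yP; rewrite -(LOo x) // -(LOo y) //; exact: (s_last xP h).
have TZext : forall x, x \in P ->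
   (index x (sort (fun a b => TZ a <= TZ b) P) == 0) ||
   ((index x (sort (fun a b => TZ a <= TZ b) P)).+1 == size (sort (fun a b => TZ a <= TZ b) P)) ->
   ones_extreme P x.
  move=> x xP /orP [/eqP h|/eqP h].
    right=> y yP; have := s_first xP h y yP; have := TZo _ xP; have := TZo _ yP; lia.
  left=> y yP; have := s_last xP h y yP; have := TZo _ xP; have := TZo _ yP; lia.
split.
- move=> x xP hmax.
  set s := sort (fun a b => LO a <= LO b) P.
  have [e1|ne1] := boolP ((index x s == 0) || ((index x s).+1 == size s)).
    exact: LOext.
  exfalso.
  have xs : x \in s by rewrite (s_mem LO).
  have ks : index x s < size s by rewrite index_mem.
  move: ne1; rewrite negb_or => /andP [k0 k1].
  have sP : forall i, i < size s -> nth x s i \in P.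
    by move=> i hi; rewrite -(s_mem LO) -/s mem_nth.
  have uL : uniq (map LO s).
    have : uniq (map LOTZ s) by rewrite (perm_uniq (perm_map LOTZ (permEl (perm_sort _ _)))).
    have -> : map LOTZ s = map (fun k => (k, n - k)) (map LO s).
      rewrite -map_comp; apply/eq_in_map => y ys /=.
      have yP : y \in P by rewrite -(s_mem LO).
      rewrite /LOTZ; congr pair; have := LOo y yP; have := TZo y yP; lia.
    exact: map_uniq.
  have strict : forall i, i.+1 < size s -> LO (nth x s i) < LO (nth x s i.+1).
    move=> i hi; rewrite ltn_neqAle s_le //; last by apply: ltnW.
    rewrite andbT -!(nth_map x 0) //; last by apply: ltnW.
    by rewrite nth_uniq ?size_map // ?(ltnW hi) //; lia.
  have Ln : forall i, i < size s -> TZ (nth x s i) + LO (nth x s i) = n.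
    by move=> i hi; rewrite LOo ?sP // TZo ?sP.
  set k := index x s in k0 k1 ks.
  have kpos : 0 < k by rewrite lt0n.
  have k2 : k.+1 < size s by rewrite ltn_neqAle k1.
  have s1 : 1 < size s by apply: leq_ltn_trans k2.
  have idx0 : index (nth x s 0) s = 0 by case: (s) s1 => //= h tl _; rewrite eqxx.
  have Hx := hmax (nth x s 0) (sP 0 (ltnW s1)).
  move: Hx; rewrite /HVC; cbv zeta; rewrite -/s -/k idx0 (negbTE k0) (negbTE k1) eqxx.
  have -> : (1 == size s) = false by case: (size s) s1 => [|[|m]].
  rewrite (set_nth_default x (nth x s 0) s1).
  have xk : nth x s k = x by rewrite nth_index.
  have Sa := strict k.-1; rewrite prednK // xk in Sa; have {}Sa := Sa ks.
  have Sb := strict k; rewrite xk in Sb; have {}Sb := Sb k2.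
  have S0 := strict 0 s1.
  have La := Ln k.-1 (leq_ltn_trans (leq_pred k) ks).
  have Lb := Ln k.+1 k2. have L0 := Ln 0 (ltnW s1). have L1 := Ln 1 s1.
  have Lx := Ln k ks; rewrite xk in Lx.
  move: Sa Sb S0 La Lb L0 L1 Lx hr1.
  set A := LO (nth x s k.-1). set B := LO (nth x s k.+1). set C := LO (nth x s 0). set D := LO (nth x s 1).
  set A' := TZ (nth x s k.-1). set B' := TZ (nth x s k.+1). set C' := TZ (nth x s 0). set D' := TZ (nth x s 1).
  set X := LO x. set X' := TZ x.
  move=> *. nia.
- move=> x xP hmax.
  set s := sort (fun a b => LO a <= LO b) P.
  have [e1|ne1] := boolP ((index x s == 0) || ((index x s).+1 == size s)).
    exact: LOext.
  set t := sort (fun a b => TZ a <= TZ b) P.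
  have [e2|ne2] := boolP ((index x t == 0) || ((index x t).+1 == size t)).
    exact: TZext.
  exfalso.
  have : CDC x P <> None.
    rewrite /CDC /cd_obj -/s -/t (negbTE ne1) (negbTE ne2) //.
  have ns : (0 < size s)%N by rewrite s_size; case: (P) xP.
  case Es : s ns => [|h tl] // _.
  have hP : h \in P by rewrite -(s_mem LO) -/s Es mem_head.
  have := hmax h hP.
  have -> : CDC h P = None.
    by rewrite /CDC /cd_obj -/s Es /= eqxx.
  by case: (CDC x P).
Qed.
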